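(* Let $k\ge 2$. A maximally-connected coupling $r=(r_{ij})$ of the 1-2 system of $(R^1,R^2)$, if it exists, is unique. Moreover, in this coupling the only entries $r_{ij}$ that can be nonzero are the diagonal entries $r_{11},\dots,r_{kk}$ together with either the entries $r_{i1},r_{i2},\dots,r_{ik}$ of a single fixed row $i$, or the entries $r_{1j},r_{2j},\dots,r_{kj}$ of a single fixed column $j$.
   Context: Let $R^1,R^2$ be two stochastically unrelated random variables with values in $\{1,\dots,k\}$, $\Pr[R^1=i]=p_i$, $\Pr[R^2=i]=q_i$, where $p_i,q_i\ge0$ and $\sum_i p_i=\sum_i q_i=1$. The 1-2 system is the system consisting of the splits $\mathbf 1[R^c\in W]$ ($c=1,2$) for all $W\subseteq\{1,\dots,k\}$ with $|W|\in\{1,2\}$. A maximally-connected coupling of the 1-2 system is a $k\times k$ matrix $r=(r_{ij})$ of nonnegative reals such that: $\sum_j r_{ij}=p_i$ and $\sum_i r_{ij}=q_j$ for all $i,j$; $r_{ii}=\min(p_i,q_i)$ for all $i$; and $r_{ii}+r_{ij}+r_{ji}+r_{jj}=\min(p_i+p_j,q_i+q_j)$ for all $i<j$. (Here $r_{ij}$ is the probability that $R^1$'s bunch is in the state of value $i$ and $R^2$'s in the state of value $j$; the conditions say each 1-split and 2-split pair is maximally coupled.) *)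

(* Defs.v *)
(* Values {1..k} are represented by 'I_k = {0..k-1}. *)
From HB Require Import structures.
From mathcomp Require Import all_boot all_order all_algebra.
Set Implicit Arguments. Unset Strict Implicit. Unset Printing Implicit Defensive.
Import Order.TTheory GRing.Theory Num.Theory.
Local Open Scope ring_scope.

Definition is_distr (R : realFieldType) (k : nat) (p : 'I_k -> R) : Prop :=
  (forall i, 0 <= p i) /\ \sum_(i < k) p i = 1.

(* r is a maximally-connected coupling of the 1-2 system of (R^1, R^2),
   where Pr[R^1 = i] = p i and Pr[R^2 = j] = q j. *)
Definition max_conn_coupling (R : realFieldType) (k : nat)
    (p q : 'I_k -> R) (r : 'M[R]_k) : Prop :=
  [/\ (forall i j, 0 <= r i j),
      (forall i, \sum_(j < k) r i j = p i),
      (forall j, \sum_(i < k) r i j = q j),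
      (forall i, r i i = Num.min (p i) (q i)) &
      (forall i j : 'I_k, (i < j)%N ->
         r i i + r i j + r j i + r j j = Num.min (p i + p j) (q i + q j))].

(* Main.v *)
Require Import Defs.
From HB Require Import structures.
From mathcomp Require Import all_boot all_order all_algebra.
From mathcomp Require Import lra.
Import Order.TTheory GRing.Theory Num.Theory.
Set Implicit Arguments. Unset Strict Implicit.
Local Open Scope ring_scope.

Ltac mins := repeat match goal with |- context [Num.min ?x ?y] => case: (lerP x y) end;
  intros; try split; lra.

Lemma sum_ge2 (R : realFieldType) (k : nat) (f : 'I_k -> R) (i j : 'I_k) :
  (forall x, 0 <= f x) -> j != i -> f i + f j <= \sum_x f x.
Proof.
move=> f0 ji.
rewrite (bigD1 i) //= (bigD1 j) /=; last by rewrite ji.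
rewrite addrA lerDl; apply: sumr_ge0 => x _; exact: f0.
Qed.

Lemma sum_ge1 (R : realFieldType) (k : nat) (f : 'I_k -> R) (i : 'I_k) :
  (forall x, 0 <= f x) -> f i <= \sum_x f x.
Proof.
move=> f0; rewrite (bigD1 i) //= lerDl; apply: sumr_ge0 => x _; exact: f0.
Qed.

Section S.
Variables (R : realFieldType) (k : nat) (p q : 'I_k -> R).
Definition aa i := p i - Num.min (p i) (q i).
Definition bb i := q i - Num.min (p i) (q i).

Lemma aa_ge0 i : 0 <= aa i. Proof. rewrite /aa; mins. Qed.
Lemma bb_ge0 i : 0 <= bb i. Proof. rewrite /bb; mins. Qed.
Lemma ab0 i : Num.min (aa i) (bb i) = 0.
Proof. rewrite /aa /bb; apply/eqP; rewrite eq_le; apply/andP; split; mins. Qed.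

Lemma ident i j : Num.min (p i + p j) (q i + q j) - Num.min (p i) (q i)
   - Num.min (p j) (q j) = Num.min (aa i) (bb j) + Num.min (aa j) (bb i).
Proof. rewrite /aa /bb; apply/eqP; rewrite eq_le; apply/andP; split; mins. Qed.

Variable r : 'M[R]_k.
Hypothesis H : max_conn_coupling p q r.

Lemma le_aa i j : j != i -> r i j <= aa i.
Proof.
case: H => h0 hr hc hd _ ji.
have := sum_ge2 (f := fun x => r i x) (h0 i) ji.
rewrite hr hd /aa; lra.
Qed.

Lemma le_bb i j : j != i -> r i j <= bb j.
Proof.
case: H => h0 hr hc hd _ ji.
have := sum_ge2 (f := fun x => r x j) (fun x => h0 x j) (i := j) (j := i).
rewrite hc hd /bb eq_sym => h; have := h ji; lra.
Qed.

Lemma pair_sum i j : i != j ->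
  r i j + r j i = Num.min (p i + p j) (q i + q j) - Num.min (p i) (q i)
   - Num.min (p j) (q j).
Proof.
case: H => h0 hr hc hd hp ij.
case: (ltngtP i j) => c.
- have := hp _ _ c; rewrite !hd; lra.
- have := hp _ _ c; rewrite !hd addrC [p j + _]addrC [q j + _]addrC; lra.
- by move: ij; rewrite (val_inj c) eqxx.
Qed.

Lemma rval i j : i != j -> r i j = Num.min (aa i) (bb j).
Proof.
move=> ij.
suff [e1 e2]: r i j <= Num.min (aa i) (bb j) /\ Num.min (aa i) (bb j) <= r i j.
  by apply/eqP; rewrite eq_le e1 e2.
have ji : j != i by rewrite eq_sym.
have := le_aa ji; have := le_bb ji; have := le_aa ij; have := le_bb ij.
have := pair_sum ij; rewrite ident.
case: H => h0 _ _ _ _; have := h0 i j; have := h0 j i.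
move: (aa i) (aa j) (bb i) (bb j) (r i j) (r j i) => ai aj bi bj x y.
mins.
Qed.

Lemma rowsum i : \sum_j Num.min (aa i) (bb j) = aa i.
Proof.
case: H => h0 hr hc hd _.
rewrite (bigD1 i) //= ab0 add0r.
rewrite (eq_bigr (fun j => r i j)); last by move=> j ji; rewrite rval // eq_sym.
have := hr i; rewrite (bigD1 i) //= hd /aa => e; lra.
Qed.

End S.

Lemma tot (R : realFieldType) (k : nat) (p q : 'I_k -> R) :
  is_distr p -> is_distr q -> \sum_i aa p q i = \sum_i bb p q i.
Proof.
move=> [_ sp] [_ sq]; rewrite /aa /bb !sumrB sp sq; done.
Qed.

Lemma contra2 (R : realFieldType) (k : nat) (p q : 'I_k -> R) (r : 'M[R]_k) :
  is_distr p -> is_distr q -> max_conn_coupling p q r ->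
  forall i1 i2 j1 j2, i1 != i2 -> j1 != j2 -> 0 < aa p q i1 -> 0 < aa p q i2 ->
  0 < bb p q j1 -> 0 < bb p q j2 -> False.
Proof.
move=> hp hq H i1 i2 j1 j2 ni nj a1 a2 b1 b2.
set B := \sum_j bb p q j.
have key : forall i, 0 < aa p q i -> aa p q i = B.
  move=> i ai.
  have allb : forall j, bb p q j < aa p q i.
    move=> j; rewrite ltNge; apply/negP => bj.
    have [j' [nj' bj']] : exists j', j' != j /\ 0 < bb p q j'.
      case: (eqVneq j1 j) => e.
      - by exists j2; split => //; rewrite -e eq_sym.
      - by exists j1.
    have f0 : forall x, 0 <= Num.min (aa p q i) (bb p q x).
      by move=> x; have := aa_ge0 p q i; have := bb_ge0 p q x; mins.
    have := sum_ge2 f0 nj'.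
    rewrite (rowsum H) => h.
    have := f0 j'; move: h bj bj' ai; mins.
  rewrite -{1}(rowsum H i); apply: eq_bigr => j _.
  have := allb j; mins.
have ni' : i2 != i1 by rewrite eq_sym.
have := sum_ge2 (@aa_ge0 _ _ p q) ni'; rewrite (tot hp hq) key // key //.
have := sum_ge1 j1 (@bb_ge0 _ _ p q).
rewrite -/B; lra.
Qed.

Theorem theorem5 (R : realFieldType) (k : nat) (hk : (2 <= k)%N)
    (p q : 'I_k -> R) (hp : is_distr p) (hq : is_distr q) :
  (forall r1 r2 : 'M[R]_k,
      max_conn_coupling p q r1 -> max_conn_coupling p q r2 -> r1 = r2) /\
  (forall r : 'M[R]_k, max_conn_coupling p q r ->
      (exists i0 : 'I_k, forall i j : 'I_k, i != j -> r i j != 0 -> i = i0) \/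
      (exists j0 : 'I_k, forall i j : 'I_k, i != j -> r i j != 0 -> j = j0)).
Proof.
have k0 : (0 < k)%N by apply: leq_trans hk.
set d0 := Ordinal k0.
split.
  move=> r1 r2 H1 H2; apply/matrixP => i j.
  case: (eqVneq i j) => [<-|ij].
  - by case: H1 => _ _ _ -> _; case: H2 => _ _ _ -> _.
  - by rewrite (rval H1 ij) (rval H2 ij).
move=> r H.
have pos : forall i j, i != j -> r i j != 0 -> 0 < aa p q i /\ 0 < bb p q j.
  move=> i j ij nz; move: nz; rewrite (rval H ij) => nz.
  have := aa_ge0 p q i; have := bb_ge0 p q j.
  case: (lerP (aa p q i) 0) => h1; case: (lerP (bb p q j) 0) => h2 g1 g2; try by split.
  - have e : aa p q i = 0 by lra.
    by move: nz; rewrite e; case: (lerP 0 (bb p q j)) => //; lra.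
  - have e : aa p q i = 0 by lra.
    by move: nz; rewrite e; case: (lerP 0 (bb p q j)) => //; lra.
  - have e : bb p q j = 0 by lra.
    by move: nz; rewrite e; case: (lerP (aa p q i) 0) => //; lra.
case Hb: [exists j1, exists j2, (j1 != j2) && (0 < bb p q j1) && (0 < bb p q j2)].
- left.
  move/existsP: Hb => [j1 /existsP [j2 /andP [/andP [nj b1] b2]]].
  exists (odflt d0 [pick i | 0 < aa p q i]) => i j ij nz.
  have [ai _] := pos _ _ ij nz.
  case: pickP => [x ax|/(_ i)]; last by rewrite ai.
  apply/eqP; apply/negP => /negP nix.
  exact: (contra2 hp hq H nix nj ai ax b1 b2).
- right.
  exists (odflt d0 [pick j | 0 < bb p q j]) => i j ij nz.
  have [_ bj] := pos _ _ ij nz.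
  case: pickP => [x bx|/(_ j)]; last by rewrite bj.
  apply/eqP; apply: contraFT Hb => njx.
  apply/existsP; exists j; apply/existsP; exists x.
  by rewrite njx bj bx.
Qed.
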